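(* Let $G$ be a finite simple graph with no isolated vertices in which every vertex has even degree, and let $C$ be a connected component of $G$. Then either $C$ contains a triangle, or $C$ contains a path of length five (a path with five edges on six distinct vertices), or $C$ is isomorphic to one of: the cycle $C_4$, the cycle $C_5$, or the complete bipartite graph $K_{2,m}$ with $m\ge 4$ even.
   Context: Graphs are undirected, without loops or multiple edges. *)

(* Defs.v *)
From mathcomp Require Import all_boot.
Set Implicit Arguments. Unset Strict Implicit. Unset Printing Implicit Defensive.

Definition simple_graph (T : finType) (e : rel T) : Prop :=
  symmetric e /\ irreflexive e.

Definition deg (T : finType) (e : rel T) (x : T) : nat := #|[set y | e x y]|.

Definition component (T : finType) (e : rel T) (v : T) : {set T} :=
  [set x | connect e v x].

Definition has_triangle (T : finType) (e : rel T) (C : {set T}) : Prop :=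
  exists x y z, [/\ x \in C, y \in C, z \in C & [&& e x y, e y z & e z x]].

Definition has_path5 (T : finType) (e : rel T) (C : {set T}) : Prop :=
  exists (x : T) (s : seq T),
    [/\ size s = 5, uniq (x :: s), path e x s & all (mem C) (x :: s)].

Definition iso_to (T : finType) (e : rel T) (C : {set T}) (U : finType) (r : rel U) : Prop :=
  exists f : U -> T,
    [/\ injective f, (forall x, x \in C <-> exists a, f a = x)
      & forall a b, e (f a) (f b) = r a b].

Definition cycle_rel (n : nat) : rel 'I_n :=
  fun i j => (j == (i.+1 %% n) :> nat) || (i == (j.+1 %% n) :> nat).

Definition K2m_rel (m : nat) : rel ('I_2 + 'I_m) :=
  fun a b => match a, b with
             | inl _, inr _ | inr _, inl _ => true
             | _, _ => false
             end.

Arguments cycle_rel n : clear implicits.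
Arguments K2m_rel m : clear implicits.

(* Main.v *)
Require Import Defs.
From mathcomp Require Import all_boot.
From Stdlib Require Import Classical.
Set Implicit Arguments. Unset Strict Implicit. Unset Printing Implicit Defensive.

Definition np6P (T:finType) (e:rel T) v := forall x0 x1 x2 x3 x4 x5 : T,
  connect e v x0 -> e x0 x1 -> e x1 x2 -> e x2 x3 -> e x3 x4 -> e x4 x5 ->
  x0 <> x1 -> x0 <> x2 -> x0 <> x3 -> x0 <> x4 -> x0 <> x5 -> x1 <> x2 ->
  x1 <> x3 -> x1 <> x4 -> x1 <> x5 -> x2 <> x3 -> x2 <> x4 -> x2 <> x5 ->
  x3 <> x4 -> x3 <> x5 -> x4 <> x5 -> False.

Definition SYM (T:finType) (e:rel T) := forall x y, e x y -> e y x.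
Definition IRR (T:finType) (e:rel T) := forall x, e x x -> False.
Definition STEP (T:finType) (e:rel T) v := forall x y, connect e v x -> e x y -> connect e v y.
Definition TRI (T:finType) (e:rel T) v :=
  forall x y z, connect e v x -> e x y -> e y z -> e x z -> False.

Definition Good (T:finType) (e:rel T) v :=
  SYM e /\ IRR e /\ STEP e v /\ TRI e v /\ np6P e v /\ (forall x, 1 < deg e x).

Ltac symsat := repeat match goal with
  | Hs : SYM ?e, H : is_true (?e ?x ?y) |- _ =>
    lazymatch goal with | _ : is_true (e y x) |- _ => fail | _ => have := Hs _ _ H; intro end
  end.
Ltac csat := repeat match goal with
  | Hs : STEP ?e ?v, H : is_true (connect ?e ?v ?x), E : is_true (?e ?x ?y) |- _ =>
    lazymatch goal with | _ : is_true (connect e v y) |- _ => fail | _ => have := Hs _ _ H E; intro end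
  end.
Ltac kill := first [ match goal with
  | Hi : IRR ?e, H : is_true (?e ?x ?x) |- _ => exact (Hi _ H)
  | H : is_true (?e ?x ?y) -> False, H' : is_true (?e ?x ?y) |- _ => exact (H H')
  | H : is_true (?e ?x ?y) -> is_true (?e ?z ?w) -> False,
    H1 : is_true (?e ?x ?y), H2 : is_true (?e ?z ?w) |- _ => exact (H H1 H2)
  | Ht : TRI ?e ?v, Hc : is_true (connect ?e ?v ?x), H1 : is_true (?e ?x ?y),
    H2 : is_true (?e ?y ?z), H3 : is_true (?e ?x ?z) |- _ => exact (Ht _ _ _ Hc H1 H2 H3)
  end | congruence ].
Ltac fin := solve [ assumption | symsat; assumption | symsat; csat; assumption |
   (let H := fresh in intro H; subst; symsat; csat; kill) |
   (exfalso; symsat; csat; kill) ].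

Lemma two_nbrs (T:finType) (e:rel T) x a : 1 < deg e x -> exists2 b, e x b & b <> a.
Proof.
move=> d.
case: (pickP [pred b | e x b && (b != a)]) => [b /andP[h1 /eqP h2]|H].
  by exists b.
have sub : [set y | e x y] \subset [set a].
  apply/subsetP => y; rewrite !inE => exy; move: (H y) => /=.
  by rewrite exy /= => /negbFE.
have := subset_leq_card sub; rewrite cards1 => h.
by move: d; rewrite /deg; case: #|_| h => [|[|]].
Qed.

Lemma comp_eq (T:finType) (e:rel T) v (S : {set T}) x0 :
  symmetric e -> x0 \in S -> connect e v x0 ->
  (forall a b, a \in S -> e a b -> b \in S) ->
  (forall x, x \in S -> connect e v x) ->
  forall x, x \in component e v <-> x \in S.
Proof.
move=> es x0S cx0 cl allc x; rewrite inE; split; last exact: allc.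
have cs : connect_sym e by apply: sym_connect_sym.
have key : forall a b, connect e a b -> a \in S -> b \in S.
  move=> a b /connectP [p]; elim: p a => [|y p IH] a /=; first by move=> _ ->.
  move=> /andP[eay pp] hb aS; apply: (IH y pp hb); exact: cl eay.
move=> cvx; apply: (key x0) => //.
apply: connect_trans cvx; by rewrite cs.
Qed.
Lemma case_lt3 (T:finType) (e:rel T) v : Good e v ->
  (forall y0 y1 y2 y3, connect e v y0 -> e y0 y1 -> e y1 y2 -> e y2 y3 ->
     y0 <> y1 -> y0 <> y2 -> y0 <> y3 -> y1 <> y2 -> y1 <> y3 -> y2 <> y3 -> False) -> False.
Proof.
move=> [esym [eirr [step [tri [np6 d2]]]]] n3.
have [a eva nav] := two_nbrs v (d2 v).
have [b evb nba] := two_nbrs a (d2 v).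
have [c eac ncv] := two_nbrs v (d2 a).
have cv : connect e v v by [].
apply: (n3 b v a c); fin.
Qed.

Lemma case3 (T:finType) (e:rel T) v x0 x1 x2 x3 : Good e v ->
  (forall y0 y1 y2 y3 y4, connect e v y0 -> e y0 y1 -> e y1 y2 -> e y2 y3 -> e y3 y4 ->
     y0 <> y1 -> y0 <> y2 -> y0 <> y3 -> y0 <> y4 -> y1 <> y2 -> y1 <> y3 -> y1 <> y4 ->
     y2 <> y3 -> y2 <> y4 -> y3 <> y4 -> False) ->
  connect e v x0 -> e x0 x1 -> e x1 x2 -> e x2 x3 ->
  x0 <> x1 -> x0 <> x2 -> x0 <> x3 -> x1 <> x2 -> x1 <> x3 -> x2 <> x3 ->
  iso_to e (component e v) (cycle_rel 4).
Proof.
move=> [esym [eirr [step [tri [np6 d2]]]]] n4 c0 e01 e12 e23 n01 n02 n03 n12 n13 n23.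
have [y e0y ny1] := two_nbrs x1 (d2 x0).
have e03 : e x0 x3.
  case: (y =P x3) => [<-//|ny3]; exfalso; apply: (n4 y x0 x1 x2 x3); fin.
have c1 : connect e v x1 by eauto.
have c2 : connect e v x2 by eauto.
have c3 : connect e v x3 by eauto.
pose S := [set x0; x1; x2; x3].
have cl : forall a b, a \in S -> e a b -> b \in S.
  move=> a b aS eab; case: (boolP (b \in S)) => // /negP bS; exfalso.
  have nb0 : b <> x0 by move=> h; apply: bS; rewrite h !inE eqxx ?orbT.
  have nb1 : b <> x1 by move=> h; apply: bS; rewrite h !inE eqxx ?orbT.
  have nb2 : b <> x2 by move=> h; apply: bS; rewrite h !inE eqxx ?orbT.
  have nb3 : b <> x3 by move=> h; apply: bS; rewrite h !inE eqxx ?orbT.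
  move: aS; rewrite !inE -!orbA => /or4P [] /eqP Ha; subst a.
  - apply: (n4 b x0 x1 x2 x3); fin.
  - apply: (n4 b x1 x2 x3 x0); fin.
  - apply: (n4 b x2 x3 x0 x1); fin.
  - apply: (n4 b x3 x0 x1 x2); fin.
have allc : forall x, x \in S -> connect e v x.
  by move=> x; rewrite !inE -!orbA => /or4P [] /eqP ->.
have es : symmetric e by move=> a b; apply/idP/idP; auto.
have ceq := comp_eq es (_ : x0 \in S) c0 cl allc.
have u : uniq [:: x0; x1; x2; x3].
  rewrite /= !inE ?negb_or ?andbT; repeat (apply/andP; split); apply/eqP; fin.
exists (fun i : 'I_4 => nth x0 [:: x0; x1; x2; x3] i); split.
- move=> i j /eqP; rewrite nth_uniq // => /eqP/val_inj //.
- move=> x; rewrite ceq; last by rewrite !inE eqxx.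
  rewrite !inE -!orbA; split.
    case/or4P => /eqP ->.
    + by exists (@Ordinal 4 0 isT).
    + by exists (@Ordinal 4 1 isT).
    + by exists (@Ordinal 4 2 isT).
    + by exists (@Ordinal 4 3 isT).
  by case=> [[[|[|[|[|i]]]] Hi]] <- //=; rewrite ?eqxx ?orbT.
- move=> [[|[|[|[|i]]]] Hi] // [[|[|[|[|j]]]] Hj] //; rewrite /cycle_rel; cbv;
  first [apply/negbTE/negP => ?; fin | fin].
Qed.
Lemma nbrB (T:finType) (e:rel T) v a c b0 b1 b2 : Good e v ->
  connect e v a -> (e a c -> False) -> a <> c ->
  b0 <> b1 -> b0 <> b2 -> b1 <> b2 ->
  e a b0 -> e a b1 -> e a b2 -> e c b0 -> e c b1 -> e c b2 ->
  forall b w, e a b -> e c b -> e b w -> w = a \/ w = c.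
Proof.
move=> G; have G' := G; move: G' => [esym [eirr [step [tri [np6 d2]]]]]; red in np6.
move=> ca nac nac' n01 n02 n12 a0 a1 a2 c0 c1 c2 b w hab hcb hbw.
case: (w =P a) => [|nwa]; [by left| right].
case: (w =P c) => // nwc; exfalso.
have [b' [b'' [h1 [h2 [h3 [h4 [h5 [h6 h7]]]]]]]] : exists b' b'', b' <> b /\ b'' <> b /\
   b' <> b'' /\ e a b' /\ e c b' /\ e a b'' /\ e c b''.
  case: (b =P b0) => [->|n0]; first by exists b1, b2; repeat split; fin.
  case: (b =P b1) => [->|n1]; first by exists b0, b2; repeat split; fin.
  by exists b0, b1; repeat split; fin.
apply: (np6 w b a b' c b''); fin.
Qed.

Lemma nbrA (T:finType) (e:rel T) v a c b0 b1 b2 : Good e v ->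
  connect e v a -> (e a c -> False) -> a <> c ->
  b0 <> b1 -> b0 <> b2 -> b1 <> b2 ->
  e a b0 -> e a b1 -> e a b2 -> e c b0 -> e c b1 -> e c b2 ->
  forall w, e a w -> e c w.
Proof.
move=> G; have G' := G; move: G' => [esym [eirr [step [tri [np6 d2]]]]]; red in np6.
move=> ca nac nac' n01 n02 n12 a0 a1 a2 c0 c1 c2 w haw.
case hcw: (e c w) => //; exfalso.
have ncw : e c w -> False by rewrite hcw.
have nwc : w <> c by fin.
have [u ewu nua] := two_nbrs a (d2 w).
case: (boolP (e a u && e c u)) => [/andP[hau hcu]|hn].
  have := nbrB G ca nac nac' n01 n02 n12 a0 a1 a2 c0 c1 c2 hau hcu (esym _ _ ewu).
  case => ?; subst; fin.
have nu : e a u -> e c u -> False by move=> h1 h2; move: hn; rewrite h1 h2.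
apply: (np6 u w a b0 c b1); fin.
Qed.

Lemma k2m (T:finType) (e:rel T) v a c b0 b1 b2 : Good e v ->
  connect e v a -> (e a c -> False) -> a <> c ->
  b0 <> b1 -> b0 <> b2 -> b1 <> b2 ->
  e a b0 -> e a b1 -> e a b2 -> e c b0 -> e c b1 -> e c b2 -> ~~ odd (deg e a) ->
  exists m : nat, [/\ 4 <= m, ~~ odd m & iso_to e (component e v) (K2m_rel m)].
Proof.
move=> G; have G' := G; move: G' => [esym [eirr [step [tri [np6 d2]]]]].
move=> ca nac nac' n01 n02 n12 a0 a1 a2 c0 c1 c2 hev.
have nA := nbrA G ca nac nac' n01 n02 n12 a0 a1 a2 c0 c1 c2.
have cc : connect e v c by fin.
have nca : e c a -> False by fin.
have nca' : c <> a by fin.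
have nA' := nbrA G cc nca nca' n01 n02 n12 c0 c1 c2 a0 a1 a2.
have nB := nbrB G ca nac nac' n01 n02 n12 a0 a1 a2 c0 c1 c2.
pose B := [set b | e a b && e c b].
have degB : deg e a = #|B|.
  rewrite /deg; apply: eq_card => y; rewrite !inE.
  by case h: (e a y) => //=; rewrite nA.
exists #|B|; split.
- have u : uniq [:: b0; b1; b2].
    rewrite /= !inE ?negb_or ?andbT; repeat (apply/andP; split); apply/eqP; fin.
  have : #|[:: b0; b1; b2]| <= #|B|.
    apply/subset_leq_card/subsetP => x; rewrite !inE => /or3P[]/eqP->;
    apply/andP; split; fin.
  rewrite (card_uniqP u) /=; move: hev; rewrite degB.
  by case: #|B| => [|[|[|[|m]]]].
- by rewrite -degB.
pose S := [set x | (x == a) || (x == c) || (x \in B)].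
have es : symmetric e by move=> x y; apply/idP/idP; auto.
have cl : forall x y, x \in S -> e x y -> y \in S.
  move=> x y; rewrite !inE -!orbA => /or3P[/eqP->|/eqP->|/andP[h1 h2]] h.
  + by rewrite h nA ?orbT.
  + by rewrite h nA' ?orbT.
  + by case: (nB _ _ h1 h2 h) => ->; rewrite eqxx ?orbT.
have allc : forall x, x \in S -> connect e v x.
  move=> x; rewrite !inE -!orbA => /or3P[/eqP->|/eqP->|/andP[h1 h2]] //; fin.
have aS : a \in S by rewrite !inE eqxx.
have ceq := comp_eq es aS ca cl allc.
have eB : forall j : 'I_#|B|, e a (enum_val j) /\ e c (enum_val j).
  by move=> j; have := enum_valP j; rewrite inE => /andP.
exists (fun s => match s with inl i => if val i == 0%N then a else c
                          | inr j => enum_val j end); split.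
- move=> [[[|[|i]] Hi]|j] [[[|[|i']] Hi']|j'] //=.
  all: try (by move=> _; congr inl; apply: val_inj).
  all: try (have [h1 h2] := eB j); try (have [h1' h2'] := eB j').
  all: try (move=> E; exfalso; first [rewrite -E in h1' h2' | rewrite E in h1 h2]; fin).
  by move=> E; congr inr; apply: enum_val_inj E.
- move=> x; apply: (iff_trans (ceq x)); rewrite inE -!orbA; split.
    case/or3P => [/eqP->|/eqP->|xB].
    + by exists (inl (@Ordinal 2 0 isT)).
    + by exists (inl (@Ordinal 2 1 isT)).
    + by exists (inr (enum_rank_in xB x)); rewrite enum_rankK_in.
  case=> [[[[|[|i]] Hi]|j] <-] //=; rewrite ?eqxx ?orbT //.
  by rewrite enum_valP !orbT.
- move=> [[[|[|i]] Hi]|j] [[[|[|i']] Hi']|j'] //=.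
  all: try (have [h1 h2] := eB j); try (have [h1' h2'] := eB j').
  all: try (apply/negbTE/negP => h; fin).
  all: try fin.
Qed.

Lemma case4 (T:finType) (e:rel T) v x0 x1 x2 x3 x4 : Good e v ->
  (forall x, ~~ odd (deg e x)) ->
  connect e v x0 -> e x0 x1 -> e x1 x2 -> e x2 x3 -> e x3 x4 ->
  x0 <> x1 -> x0 <> x2 -> x0 <> x3 -> x0 <> x4 -> x1 <> x2 -> x1 <> x3 -> x1 <> x4 ->
  x2 <> x3 -> x2 <> x4 -> x3 <> x4 ->
  iso_to e (component e v) (cycle_rel 5) \/
  (exists m : nat, [/\ 4 <= m, ~~ odd m & iso_to e (component e v) (K2m_rel m)]).
Proof.
move=> G; have G' := G; move: G' => [esym [eirr [step [tri [np6 d2]]]]]; red in np6.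
move=> hev c0 e01 e12 e23 e34 n01 n02 n03 n04 n12 n13 n14 n23 n24 n34.
have c1 : connect e v x1 by fin.
have c2 : connect e v x2 by fin.
have c3 : connect e v x3 by fin.
have c4 : connect e v x4 by fin.
have [y e0y ny1] := two_nbrs x1 (d2 x0).
have y34 : y = x3 \/ y = x4.
  case: (y =P x3) => [|ny3]; [by left|right].
  case: (y =P x4) => // ny4; exfalso; apply: (np6 y x0 x1 x2 x3 x4); fin.
case h04: (e x0 x4).
- left; have e04 : e x0 x4 := h04.
  pose S := [set x0; x1; x2; x3; x4].
  have cl : forall a b, a \in S -> e a b -> b \in S.
    move=> a b aS eab; case: (boolP (b \in S)) => // /negP bS; exfalso.
    have nb0 : b <> x0 by move=> h; apply: bS; rewrite h !inE eqxx ?orbT.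
    have nb1 : b <> x1 by move=> h; apply: bS; rewrite h !inE eqxx ?orbT.
    have nb2 : b <> x2 by move=> h; apply: bS; rewrite h !inE eqxx ?orbT.
    have nb3 : b <> x3 by move=> h; apply: bS; rewrite h !inE eqxx ?orbT.
    have nb4 : b <> x4 by move=> h; apply: bS; rewrite h !inE eqxx ?orbT.
    move: aS; rewrite !inE -!orbA => /orP[/eqP Ha|/orP[/eqP Ha|/orP[/eqP Ha|/orP[/eqP Ha|/eqP Ha]]]]; subst a.
    + apply: (np6 b x0 x1 x2 x3 x4); fin.
    + apply: (np6 b x1 x2 x3 x4 x0); fin.
    + apply: (np6 b x2 x3 x4 x0 x1); fin.
    + apply: (np6 b x3 x4 x0 x1 x2); fin.
    + apply: (np6 b x4 x0 x1 x2 x3); fin.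
  have allc : forall x, x \in S -> connect e v x.
    by move=> x; rewrite !inE -!orbA => /orP[/eqP->|/orP[/eqP->|/orP[/eqP->|/orP[/eqP->|/eqP->]]]].
  have es : symmetric e by move=> a b; apply/idP/idP; auto.
  have x0S : x0 \in S by rewrite !inE eqxx.
  have ceq := comp_eq es x0S c0 cl allc.
  have u : uniq [:: x0; x1; x2; x3; x4].
    rewrite /= !inE ?negb_or ?andbT; repeat (apply/andP; split); apply/eqP; fin.
  exists (fun i : 'I_5 => nth x0 [:: x0; x1; x2; x3; x4] i); split.
  + move=> i j /eqP; rewrite nth_uniq // => /eqP/val_inj //.
  + move=> x; apply: (iff_trans (ceq x)).
    rewrite !inE -!orbA; split.
      case/orP=> [/eqP->|/orP[/eqP->|/orP[/eqP->|/orP[/eqP->|/eqP->]]]].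
      * by exists (@Ordinal 5 0 isT).
      * by exists (@Ordinal 5 1 isT).
      * by exists (@Ordinal 5 2 isT).
      * by exists (@Ordinal 5 3 isT).
      * by exists (@Ordinal 5 4 isT).
    by case=> [[[|[|[|[|[|i]]]]] Hi]] <- //=; rewrite ?eqxx ?orbT.
  + move=> [[|[|[|[|[|i]]]]] Hi] // [[|[|[|[|[|j]]]]] Hj] //; rewrite /cycle_rel; cbv;
    first [apply/negbTE/negP => ?; fin | fin].
- right.
  have n04' : e x0 x4 -> False by rewrite h04.
  have e03 : e x0 x3 by case: y34 => E; subst => //; rewrite h04 in e0y.
  have [z e4z nz3] := two_nbrs x3 (d2 x4).
  have e41 : e x4 x1.
    case: (z =P x1) => [<-//|nz1]; exfalso; apply: (np6 x0 x1 x2 x3 x4 z); fin.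
  apply: (k2m (a:=x1) (c:=x3) (b0:=x0) (b1:=x2) (b2:=x4) G); try exact: hev; fin.
Qed.

Theorem claim4 (T : finType) (e : rel T) (v : T) :
  simple_graph e ->
  (forall x : T, 0 < deg e x) ->
  (forall x : T, ~~ odd (deg e x)) ->
  has_triangle e (component e v) \/
  has_path5 e (component e v) \/
  iso_to e (component e v) (cycle_rel 4) \/
  iso_to e (component e v) (cycle_rel 5) \/
  (exists m : nat, [/\ 4 <= m, ~~ odd m & iso_to e (component e v) (K2m_rel m)]).
Proof.
move=> [es ei] hpos hev.
have d2 : forall x, 1 < deg e x.
  by move=> x; move: (hpos x) (hev x); case: (deg e x) => [|[|]].
case: (classic (has_triangle e (component e v))) => [h|ntri]; first by left.
case: (classic (has_path5 e (component e v))) => [h|np]; first by right; left.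
right; right.
have step : STEP e v.
  by move=> x y cx exy; apply: connect_trans cx (connect1 exy).
have esym : SYM e by move=> x y; rewrite es.
have eirr : IRR e by move=> x; rewrite ei.
have tri : TRI e v.
  move=> x y z cx exy eyz exz; apply: ntri; exists x, y, z; split; rewrite ?inE //.
  - exact: step _ _ cx exy.
  - exact: step _ _ (step _ _ cx exy) eyz.
  - by rewrite exy eyz es.
have np6 : np6P e v.
  move=> x0 x1 x2 x3 x4 x5 c0 e01 e12 e23 e34 e45 n01 n02 n03 n04 n05 n12 n13 n14 n15
    n23 n24 n25 n34 n35 n45.
  apply: np; exists x0, [:: x1; x2; x3; x4; x5]; split => //.
  - rewrite /= !inE ?negb_or ?andbT; repeat (apply/andP; split); apply/eqP; fin.
  - by rewrite /= e01 e12 e23 e34 e45.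
  - rewrite /= !inE; repeat (apply/andP; split) => //; fin.
have G : Good e v by do 5 (split => //).
case: (classic (exists x0 x1 x2 x3 x4, connect e v x0 /\ e x0 x1 /\ e x1 x2 /\ e x2 x3 /\
   e x3 x4 /\ x0 <> x1 /\ x0 <> x2 /\ x0 <> x3 /\ x0 <> x4 /\ x1 <> x2 /\ x1 <> x3 /\
   x1 <> x4 /\ x2 <> x3 /\ x2 <> x4 /\ x3 <> x4)) =>
  [[x0 [x1 [x2 [x3 [x4 [h0 [h1 [h2 [h3 [h4 [h5 [h6 [h7 [h8 [h9 [h10 [h11 [h12 [h13 h14]]]]]]]]]]]]]]]]]]]|n4].
  by right; apply: (case4 G hev h0 h1 h2 h3 h4).
case: (classic (exists x0 x1 x2 x3, connect e v x0 /\ e x0 x1 /\ e x1 x2 /\ e x2 x3 /\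
   x0 <> x1 /\ x0 <> x2 /\ x0 <> x3 /\ x1 <> x2 /\ x1 <> x3 /\ x2 <> x3)) =>
  [[x0 [x1 [x2 [x3 [h0 [h1 [h2 [h3 [h4 [h5 [h6 [h7 [h8 h9]]]]]]]]]]]]]|n3].
  left; apply: (case3 G _ h0 h1 h2 h3 h4 h5 h6 h7 h8 h9).
  move=> y0 y1 y2 y3 y4 *; apply: n4; exists y0, y1, y2, y3, y4; tauto.
exfalso; apply: (case_lt3 G).
move=> y0 y1 y2 y3 *; apply: n3; exists y0, y1, y2, y3; tauto.
Qed.
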